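(* There is a deterministic algorithm which, given the level of every vertex of $G$ and access to a matrix-vector oracle $q\mapsto Mq$ (over $GF(2)$) for the adjacency matrix $M$ of $G$, correctly determines the parent of every non-root vertex of $G$ using $O(\log^2 n)$ oracle queries, where $G$ is any directed graph on vertex set $[n]$ that is the reflexive transitive closure of a branching.
   Context: A branching is a forest of rooted trees with all edges directed away from the roots; its reflexive transitive closure adds an edge $(u,w)$ whenever $w$ is reachable from $u$, including a loop at every vertex. The adjacency matrix $M\in\{0,1\}^{n\times n}$ has $M_{j,i}=1$ iff $(i,j)$ is an edge of $G$. The level of a vertex is its depth in the underlying branching (roots on level $0$); the parent of a vertex on level $\ell\geq1$ is its parent in the branching, i.e. its unique in-neighbor in $G$ on level $\ell-1$. *)

(* Defs.v *)
From HB Require Import structures.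
From mathcomp Require Import all_boot all_order all_algebra.
Set Implicit Arguments. Unset Strict Implicit. Unset Printing Implicit Defensive.
Import GRing.Theory.
Local Open Scope ring_scope.

(* A branching on vertex set 'I_n is given by a partial parent function:
   par v = None iff v is a root, par v = Some p iff p is the parent of v. *)

Definition iterp n (par : 'I_n -> option 'I_n) (k : nat) (v : 'I_n) : option 'I_n :=
  iter k (fun o => obind par o) (Some v).

Definition reach n (par : 'I_n -> option 'I_n) (u w : 'I_n) : Prop :=
  exists k, iterp par k w = Some u.

Definition is_branching n (par : 'I_n -> option 'I_n) : Prop :=
  forall v : 'I_n, exists k, iterp par k v = None.

Definition is_level n (par : 'I_n -> option 'I_n) (lev : 'I_n -> nat) : Prop :=
  forall v : 'I_n,
    (par v = None -> lev v = 0%N) /\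
    (forall p, par v = Some p -> lev v = (lev p).+1).

(* M is the GF(2) adjacency matrix of the reflexive transitive closure G of
   the branching: M j i = 1 iff (i,j) is an edge of G iff j reachable from i. *)
Definition is_closure_adjmx n (par : 'I_n -> option 'I_n) (M : 'M['F_2]_n) : Prop :=
  forall i j : 'I_n, M j i = 1 <-> reach par i j.

(* Deterministic adaptive query algorithms (decision trees) with a
   matrix-vector oracle q |-> M q over GF(2): either ask a query vector q and
   continue depending on the answer M q, or output a parent assignment. *)
Inductive qtree (n : nat) : Type :=
  | Ask : 'cV['F_2]_n -> ('cV['F_2]_n -> qtree n) -> qtree n
  | Answer : ('I_n -> 'I_n) -> qtree n.

Fixpoint run n (t : qtree n) (M : 'M['F_2]_n) : ('I_n -> 'I_n) * nat :=
  match t with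
  | Answer f => (f, 0%N)
  | Ask q k => let r := run (k (M *m q)) M in (r.1, r.2.+1)
  end.

(* Main.v *)
Require Import Defs.
From mathcomp Require Import all_boot all_order all_algebra.
From mathcomp Require Import zify.
Set Implicit Arguments. Unset Strict Implicit. Unset Printing Implicit Defensive.
Import GRing.Theory.

Lemma bits_uniq (B u w : nat) : (u < 2 ^ B)%N -> (w < 2 ^ B)%N ->
  (forall b, (b < B)%N -> odd (u %/ 2 ^ b) = odd (w %/ 2 ^ b)) -> u = w.
Proof.
elim: B u w => [|B IH] u w Hu Hw H.
  by clear H; move: Hu Hw; rewrite expn0; case: u; case: w.
have H0 := H 0%N isT; rewrite !expn0 !divn1 in H0.
have E : u./2 = w./2.
  apply: IH.
  - by rewrite -divn2 ltn_divLR // -expnSr.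
  - by rewrite -divn2 ltn_divLR // -expnSr.
  move=> b Hb; have := H b.+1 Hb.
  by rewrite expnS -!divn2 !divnMA.
by rewrite -[LHS]odd_double_half -[RHS]odd_double_half H0 E.
Qed.

Lemma arith (p x j : nat) : (0 < p)%N -> odd (x %/ p) ->
  let m := (x %/ (p * 2) * (p * 2))%N in
  (x %/ p * p = m + p)%N /\ (m + p <= x)%N /\
  ((j <= x.+1)%N -> ((m < j)%N && (j %% (p * 2) == p)) = (j == m + p)).
Proof.
move=> Hp Ho m.
have Ey : (x %/ p = (x %/ (p * 2)) * 2 + 1)%N.
  rewrite divnMA; rewrite -[in LHS](odd_double_half (x %/ p)) Ho -divn2.
  lia.
have Hx := divn_eq x p. have Hr := ltn_pmod x Hp.
have Ej := divn_eq j (p * 2). have Hr2 := ltn_pmod j (_ : 0 < p * 2)%N.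
rewrite /m; split; first by rewrite Ey; lia.
split; first by rewrite Ey in Hx; lia.
move=> Hj; set a := (x %/ (p * 2))%N in Ey *.
set c := (j %/ (p * 2))%N in Ej.
apply/idP/eqP.
  case/andP=> H1 /eqP H2.
  rewrite Ey in Hx.
  have Hc : c = a.
    have L1 : (c < a.+1)%N.
      rewrite -(ltn_pmul2r (_ : 0 < p * 2)%N); last lia. nia.
    have L2 : (a < c.+1)%N.
      rewrite -(ltn_pmul2r (_ : 0 < p * 2)%N); last lia. nia.
    lia.
  rewrite Ej H2 Hc. lia.
move=> ->; apply/andP; split; first lia.
by rewrite modnMDl modn_small //; lia.
Qed.
Local Open Scope ring_scope.
Lemma F2cases (x : 'F_2) : x = 0 \/ x = 1.
Proof. case: x => [[|[|m]] Hm]; [left|right|by []]; exact: val_inj. Qed.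

Lemma iterp_lev n (par : 'I_n -> option 'I_n) lev : is_level par lev ->
  forall k v u, iterp par k v = Some u -> (lev u + k)%N = lev v.
Proof.
move=> Hl; elim=> [|k IH] v u /=; first by case=> ->; rewrite addn0.
rewrite /iterp /=; case E: (iter k _ _) => [w|] //= Hw.
have := IH v w E; have [_ H2] := Hl w; rewrite (H2 _ Hw); lia.
Qed.

Lemma iterp_ex n (par : 'I_n -> option 'I_n) lev : is_level par lev ->
  forall k v, (k <= lev v)%N -> exists u, iterp par k v = Some u.
Proof.
move=> Hl; elim=> [|k IH] v Hk; first by exists v.
have [w Hw] := IH v (ltnW Hk).
have Hlw := iterp_lev Hl Hw.
rewrite /iterp /=; rewrite /iterp in Hw; rewrite Hw /=.
case E: (par w) => [p|]; first by exists p.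
have [H1 _] := Hl w; rewrite H1 // in Hlw; lia.
Qed.

Definition anc n (par : 'I_n -> option 'I_n) (lev : 'I_n -> nat) v j :=
  odflt v (iterp par (lev v - j) v).

Lemma anc_spec n (par : 'I_n -> option 'I_n) lev : is_level par lev ->
  forall v j, (j <= lev v)%N ->
  iterp par (lev v - j) v = Some (anc par lev v j) /\ lev (anc par lev v j) = j.
Proof.
move=> Hl v j Hj; have [u Hu] := iterp_ex Hl (leq_subr j (lev v)).
rewrite /anc Hu /=; split=> //; have := iterp_lev Hl Hu; lia.
Qed.

Lemma anc_anc n (par : 'I_n -> option 'I_n) lev : is_level par lev ->
  forall v m j, (j <= m)%N -> (m <= lev v)%N ->
  anc par lev (anc par lev v m) j = anc par lev v j.
Proof.
move=> Hl v m j Hjm Hm.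
have [H1 H2] := anc_spec Hl Hm.
have [H3 _] := anc_spec Hl (leq_trans Hjm Hm).
rewrite {1}/anc H2.
have -> : iterp par (m - j) (anc par lev v m) = iterp par (lev v - j) v.
  by rewrite /iterp (_ : (lev v - j = (m - j) + (lev v - m))%N) ?iterD -?H1 //; lia.
by rewrite H3.
Qed.

Lemma reach_anc n (par : 'I_n -> option 'I_n) lev : is_level par lev ->
  forall i v, reach par i v <-> ((lev i <= lev v)%N /\ i = anc par lev v (lev i)).
Proof.
move=> Hl i v; split.
  case=> k Hk; have E := iterp_lev Hl Hk.
  split; first lia.
  by rewrite /anc (_ : (lev v - lev i = k)%N) ?Hk //; lia.
case=> H1 H2; exists (lev v - lev i)%N.
by have [-> _] := anc_spec Hl H1; rewrite -H2.
Qed.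

Lemma sum_anc n (par : 'I_n -> option 'I_n) lev (M : 'M['F_2]_n) :
  is_level par lev -> is_closure_adjmx par M ->
  forall (u : 'I_n) (g : 'I_n -> 'F_2),
  \sum_i M u i * g i = \sum_(j < (lev u).+1) g (anc par lev u j).
Proof.
move=> Hl HM u g.
have -> : \sum_(j < (lev u).+1) g (anc par lev u j) =
  \sum_(j < (lev u).+1) \sum_i (if i == anc par lev u j then g i else 0).
  by apply: eq_bigr => j _; rewrite -big_mkcond big_pred1_eq.
rewrite exchange_big /=; apply: eq_bigr => i _.
case: (F2cases (M u i)) => E.
- rewrite E mul0r big1 // => j _; case: eqP => // Ei.
  have : M u i = 1.
    have Hj : (j <= lev u)%N by rewrite -ltnS.
    apply/HM/reach_anc => //; have [_ H2] := anc_spec Hl Hj.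
    by rewrite Ei H2.
  by rewrite E => /eqP; rewrite eq_sym oner_eq0.
- rewrite E mul1r; have [H1 H2] := (reach_anc Hl i u).1 ((HM i u).1 E).
  have H1' : (lev i < (lev u).+1)%N by rewrite ltnS.
  rewrite (bigD1 (Ordinal H1')) //= -H2 eqxx big1 ?addr0 //.
  move=> j Hj; case: eqP => // Ei; exfalso; move/eqP: Hj; apply; apply: val_inj => /=.
  have Hj' : (j <= lev u)%N by rewrite -ltnS.
  by rewrite Ei; have [_ ->] := anc_spec Hl Hj'.
Qed.

Lemma arith_even (p x : nat) : (0 < p)%N -> ~~ odd (x %/ p) ->
  (x %/ (p * 2) * (p * 2) = x %/ p * p)%N.
Proof.
move=> Hp Ho; rewrite divnMA.
rewrite -[in RHS](odd_double_half (x %/ p)) (negbTE Ho) -divn2; lia.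
Qed.

Lemma lev_lt n (par : 'I_n -> option 'I_n) lev : is_level par lev ->
  forall v, (lev v < n)%N.
Proof.
move=> Hl v.
have inj : injective (fun j : 'I_(lev v).+1 => anc par lev v j).
  move=> i j E; apply: val_inj => /=.
  have Hi : (i <= lev v)%N by rewrite -ltnS.
  have Hj : (j <= lev v)%N by rewrite -ltnS.
  by have [_ <-] := anc_spec Hl Hi; have [_ <-] := anc_spec Hl Hj; rewrite E.
by have := leq_card _ inj; rewrite !card_ord.
Qed.

Local Open Scope ring_scope.

Definition bitv n (u : 'I_n) (b : nat) : 'F_2 := (odd (u %/ 2 ^ b))%:R.
Definition Sf (f l : nat) : bool :=
  if f is k.+1 then (l %% (2 ^ k * 2) == 2 ^ k)%N else (l == 0)%N.
Definition qv n (lev : 'I_n -> nat) (f b : nat) : 'cV['F_2]_n :=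
  \col_u (if Sf f (lev u) then bitv u b else 0).
Definition dec n B (D : nat -> 'F_2) (d : 'I_n) : 'I_n :=
  odflt d [pick u : 'I_n | [forall b : 'I_B, bitv u b == D b]].
Definition mk k x := (x %/ 2 ^ k * 2 ^ k)%N.
Fixpoint Anc n (lev : 'I_n -> nat) B (R : nat -> nat -> 'cV['F_2]_n) (t : nat)
  (v : 'I_n) : 'I_n :=
  match t with
  | 0 => dec B (fun b => R 0%N b v 0) v
  | t'.+1 => let k := (B - t)%N in let w := Anc lev B R t' v in
     let x := (lev v).-1 in
     if mk k x == mk k.+1 x then w
     else dec B (fun b => R k.+1 b v 0 - R k.+1 b w 0) v
  end.

Lemma bitv_inj n B (u w : 'I_n) : (n <= 2 ^ B)%N ->
  (forall b, (b < B)%N -> bitv u b = bitv w b) -> u = w.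
Proof.
move=> Hn H; apply: val_inj; apply: (@bits_uniq B).
- exact: leq_trans (ltn_ord u) Hn.
- exact: leq_trans (ltn_ord w) Hn.
move=> b Hb; have := H b Hb; rewrite /bitv.
by case: (odd _); case: (odd _) => // /eqP; rewrite ?oner_eq0 // eq_sym oner_eq0.
Qed.

Lemma dec_ok n B (D : nat -> 'F_2) (d u : 'I_n) : (n <= 2 ^ B)%N ->
  (forall b, (b < B)%N -> D b = bitv u b) -> dec B D d = u.
Proof.
move=> Hn H; rewrite /dec; case: pickP => [w /forallP Hw|H0] /=.
  apply: (bitv_inj Hn) => b Hb; rewrite -H //.
  by have /eqP := Hw (Ordinal Hb).
have := H0 u; rewrite /=; move/negbT/negP; case; apply/forallP => b.
by rewrite H.
Qed.

Lemma R_entry n (par : 'I_n -> option 'I_n) lev (M : 'M['F_2]_n) :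
  is_level par lev -> is_closure_adjmx par M -> forall f b u,
  (M *m qv lev f b) u 0 =
  \sum_(j < (lev u).+1) (if Sf f j then bitv (anc par lev u j) b else 0).
Proof.
move=> Hl HM f b u; rewrite mxE (sum_anc Hl HM u (fun i => qv lev f b i 0)).
apply: eq_bigr => j _; rewrite mxE.
have Hj : (j <= lev u)%N by rewrite -ltnS.
by have [_ ->] := anc_spec Hl Hj.
Qed.

Lemma Anc_ok n (par : 'I_n -> option 'I_n) lev (M : 'M['F_2]_n) B
  (R : nat -> nat -> 'cV['F_2]_n) :
  is_level par lev -> is_closure_adjmx par M -> (n <= 2 ^ B)%N ->
  (forall f b, (f <= B)%N -> (b < B)%N -> R f b = M *m qv lev f b) ->
  forall v, (0 < lev v)%N -> forall t, (t <= B)%N ->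
  Anc lev B R t v = anc par lev v (mk (B - t) (lev v).-1).
Proof.
move=> Hl HM Hn HR v Hv.
have Hx : ((lev v).-1 < 2 ^ B)%N.
  have := lev_lt Hl v; lia.
elim=> [|t IH] Ht /=.
  rewrite subn0 /mk divn_small // mul0n.
  apply: dec_ok => // b Hb; rewrite HR // (R_entry Hl HM).
  rewrite -big_mkcond /= (big_ord1_eq _ (fun j : nat => bitv (anc par lev v j) b) 0).
  by [].
set k := (B - t.+1)%N.
have Ek : (B - t = k.+1)%N by rewrite /k; lia.
rewrite IH ?Ek; last exact: ltnW.
case: ifP => [/eqP -> //|Hne].
set x := (lev v).-1 in Hne Hx *.
have Hp : (0 < 2 ^ k)%N by rewrite expn_gt0.
have Ho : odd (x %/ 2 ^ k).
  apply/negPn/negP => Hev; move/negbT/eqP: Hne; apply.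
  by rewrite /mk expnSr (arith_even Hp Hev).
have [E1 [E2 _]] := @arith (2 ^ k) x 0 Hp Ho.
have E3 := fun j => (@arith (2 ^ k) x j Hp Ho).2.2.
move: E1 E2 E3; set m := (x %/ (2 ^ k * 2) * (2 ^ k * 2))%N => E1 E2 E3.
have Emk1 : mk k.+1 x = m by rewrite /mk expnSr.
have Emk : mk k x = (m + 2 ^ k)%N by rewrite /mk E1.
rewrite Emk1 Emk.
have HmL : (m <= lev v)%N by lia.
set w := anc par lev v m.
have [_ Hlw] := anc_spec Hl HmL.
apply: dec_ok => // b Hb.
have Hk : (k.+1 <= B)%N by rewrite /k; lia.
rewrite !HR // !(R_entry Hl HM) Hlw.
have Hw : (m.+1 <= (lev v).+1)%N by lia.
rewrite (big_ord_widen _ (fun j : nat => if Sf k.+1 j then bitv (anc par lev w j) b else 0) Hw).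
rewrite [X in _ - X]big_mkcond -sumrB.
have -> : \sum_(i < (lev v).+1)
   ((if Sf k.+1 i then bitv (anc par lev v i) b else 0) -
    (if (i < m.+1)%N then (if Sf k.+1 i then bitv (anc par lev w i) b else 0) else 0))
  = \sum_(i < (lev v).+1) (if (i == m + 2 ^ k :> nat)%N then bitv (anc par lev v i) b else 0).
  apply: eq_bigr => i _.
  have Hi : (i <= x.+1)%N by have := ltn_ord i; lia.
  rewrite -(E3 i Hi).
  case: ltnP => Him /=.
    by rewrite anc_anc // subrr.
  by rewrite subr0 /Sf.
rewrite -big_mkcond /= (big_ord1_eq _ (fun j : nat => bitv (anc par lev v j) b)).
case: ifP => //; lia.
Qed.

Fixpoint askall n (qs : seq 'cV['F_2]_n) (F : seq 'cV['F_2]_n -> 'I_n -> 'I_n) : qtree n :=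
  match qs with
  | [::] => Answer (F [::])
  | q :: qs' => Ask q (fun r => askall qs' (fun rs => F (r :: rs)))
  end.

Lemma run_askall n (qs : seq 'cV['F_2]_n) F M :
  run (askall qs F) M = (F (map (mulmx M) qs), size qs).
Proof. by elim: qs F => [|q qs IH] F //=; rewrite IH. Qed.

Definition Bn n := (trunc_log 2 n).+1.
Notation qidx n := ('I_(Bn n).+1 * 'I_(Bn n))%type.
Definition qlist n (lev : 'I_n -> nat) : seq 'cV['F_2]_n :=
  map (fun x : qidx n => qv lev x.1 x.2) (enum {: qidx n}).
Definition Ract n (rs : seq 'cV['F_2]_n) (f b : nat) : 'cV['F_2]_n :=
  nth 0 rs (enum_rank ((inord f, inord b) : qidx n)).

Lemma Ract_ok n (lev : 'I_n -> nat) (M : 'M['F_2]_n) f b :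
  (f <= Bn n)%N -> (b < Bn n)%N ->
  Ract (map (mulmx M) (qlist lev)) f b = M *m qv lev f b.
Proof.
move=> Hf Hb; rewrite /Ract /qlist -map_comp.
set x0 := ((inord f, inord b) : qidx n).
rewrite (nth_map x0); last by rewrite -cardE ltn_ord.
by rewrite nth_enum_rank /= !inordK.
Qed.

Theorem lemma23 :
  exists (A : forall n : nat, ('I_n -> nat) -> qtree n) (C : nat),
    forall (n : nat) (par : 'I_n -> option 'I_n) (lev : 'I_n -> nat)
           (M : 'M['F_2]_n),
      is_branching par -> is_level par lev -> is_closure_adjmx par M ->
      (forall v p : 'I_n, par v = Some p -> (run (A n lev) M).1 v = p) /\
      ((run (A n lev) M).2 <= C * (trunc_log 2 n).+1 ^ 2)%N.
Proof.
exists (fun n lev => askall (qlist lev) (fun rs v => Anc lev (Bn n) (Ract rs) (Bn n) v)), 2%N.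
move=> n par lev M _ Hl HM; rewrite run_askall; split.
  move=> v p Hp.
  change (Anc lev (Bn n) (Ract (map (mulmx M) (qlist lev))) (Bn n) v = p).
  have [_ H2] := Hl v; have Hlv := H2 p Hp.
  have Hn : (n <= 2 ^ Bn n)%N by apply: ltnW; apply: trunc_log_ltn.
  have Hv : (0 < lev v)%N by rewrite Hlv.
  have HR : forall f b, (f <= Bn n)%N -> (b < Bn n)%N ->
      Ract (map (mulmx M) (qlist lev)) f b = M *m qv lev f b.
    by move=> f b Hf Hb; apply: Ract_ok.
  rewrite (Anc_ok Hl HM Hn HR Hv (leqnn _)).
  rewrite subnn /mk expn0 divn1 muln1 /anc Hlv /=.
  rewrite (_ : ((lev p).+1 - lev p = 1)%N); last lia.
  by rewrite /iterp /= Hp.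
rewrite size_map -cardE card_prod !card_ord /Bn /=; nia.
Qed.
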